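(* Let $\mathcal K_0$ be one of the following five classes of neighborhood frames: the monotonic frames, the quasi-filter frames, the augmented quasi-filter frames, the filter frames, or the augmented filter frames, and let $\mathcal K$ be CPL-elementary relative to $\mathcal K_0$, i.e. $\mathcal K=\{F\in\mathcal K_0: F\models T\}$ for some set $T$ of $L_=$-sentences. Let $\mathcal S$ be the least class of BAMs containing $\mathcal K^+=\{F^+:F\in\mathcal K\}$ and closed under subalgebras. Then (1) $\mathcal S$ is closed under canonical extensions, and (2) $\mathcal S$ is closed under ultraproducts.
   Context: A neighborhood frame is a pair $F=(F,N^F)$ with $N^F: F\to\mathscr P(\mathscr P(F))$. It is monotonic if each $N^F(w)$ is closed under supersets; quasi-filter if it is monotonic and each $N^F(w)$ is closed under intersections of nonempty finite families; filter if it is quasi-filter and each $N^F(w)$ is nonempty; augmented quasi-filter if each $N^F(w)$ is empty or a principal upset of $\mathscr P(F)$; augmented filter if each $N^F(w)$ is a principal upset. $L_=$ is the least set of formulas containing equality atoms and closed under Boolean combinations, existential quantification, and formation of $x\,\Box_y\,\phi$ ($y$ bound). Satisfaction: as in first-order logic, with $F\models w\,\Box_y\,\phi(y)$ iff $\{v: F\models\phi(v)\}\in N^F(w)$. A BAM is a Boolean algebra $A$ with a monotone map $\Box:A\to A$; subalgebras, isomorphisms and ultraproducts are taken in the usual algebraic sense for this signature. $F^+=(\mathscr P(F),\Box^F)$ with $\Box^F(X)=\{w: X\in N^F(w)\}$. For a BAM $A$, $\mathrm{Uf}(A)$ is its set of ultrafilters, $[a]=\{u: a\in u\}$, closed sets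 are intersections of sets $[a]$, and the canonical extension is $A^\sigma=(\mathscr P(\mathrm{Uf}(A)),\Box^\sigma)$ with $\Box^\sigma(u)=\bigcup_{K\text{ closed},K\subseteq u}\bigcap_{[a]\supseteq K}[\Box(a)]$. *)

(* Defs.v *)
From Stdlib Require Import Arith.

(* Subsets of a type are predicates.  Domains are nonempty (first-order
   convention). *)
Record Frame := mkFrame {
  fW : Type;
  fN : fW -> (fW -> Prop) -> Prop;
  fW_inh : inhabited fW
}.

Definition subset {X : Type} (A B : X -> Prop) : Prop := forall x, A x -> B x.

Definition monotonic (F : Frame) : Prop :=
  forall w (X Y : fW F -> Prop), fN F w X -> subset X Y -> fN F w Y.

Definition fin_inter_closed (F : Frame) : Prop :=
  forall w (n : nat) (X : nat -> fW F -> Prop),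
    (forall i, i <= n -> fN F w (X i)) ->
    fN F w (fun v => forall i, i <= n -> X i v).

Definition quasi_filter (F : Frame) : Prop :=
  monotonic F /\ fin_inter_closed F.

Definition filter_frame (F : Frame) : Prop :=
  quasi_filter F /\ forall w, exists X, fN F w X.

Definition principal_upset (F : Frame) (w : fW F) : Prop :=
  exists X0 : fW F -> Prop, forall X, fN F w X <-> subset X0 X.

Definition aug_quasi_filter (F : Frame) : Prop :=
  forall w, (forall X, ~ fN F w X) \/ principal_upset F w.

Definition aug_filter (F : Frame) : Prop :=
  forall w, principal_upset F w.

Inductive FrameClass := Monotonic | QuasiFilter | AugQuasiFilter | Filter | AugFilter.

Definition in_class (c : FrameClass) (F : Frame) : Prop :=
  match c with
  | Monotonic => monotonic F
  | QuasiFilter => quasi_filter F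
  | AugQuasiFilter => aug_quasi_filter F
  | Filter => filter_frame F
  | AugFilter => aug_filter F
  end.

Inductive formula :=
  | FEq  : nat -> nat -> formula
  | FNeg : formula -> formula
  | FAnd : formula -> formula -> formula
  | FOr  : formula -> formula -> formula
  | FEx  : nat -> formula -> formula
  | FBox : nat -> nat -> formula -> formula.    (* x Box_y phi, y bound *)

Fixpoint free (phi : formula) (z : nat) : Prop :=
  match phi with
  | FEq x y => z = x \/ z = y
  | FNeg p => free p z
  | FAnd p q | FOr p q => free p z \/ free q z
  | FEx x p => z <> x /\ free p z
  | FBox x y p => z = x \/ (z <> y /\ free p z)
  end.

Definition sentence (phi : formula) : Prop := forall z, ~ free phi z.

Definition upd {W : Type} (g : nat -> W) (y : nat) (v : W) : nat -> W :=
  fun z => if Nat.eqb z y then v else g z.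

Fixpoint sat (F : Frame) (g : nat -> fW F) (phi : formula) : Prop :=
  match phi with
  | FEq x y => g x = g y
  | FNeg p => ~ sat F g p
  | FAnd p q => sat F g p /\ sat F g q
  | FOr p q => sat F g p \/ sat F g q
  | FEx x p => exists v, sat F (upd g x v) p
  | FBox x y p => fN F (g x) (fun v => sat F (upd g y v) p)
  end.

Definition models (F : Frame) (phi : formula) : Prop :=
  forall g : nat -> fW F, sat F g phi.

Definition elem_class (c : FrameClass) (T : formula -> Prop) (F : Frame) : Prop :=
  in_class c F /\ forall phi, T phi -> models F phi.

Record BAM := mkBAM {
  carrier : Type;
  bjoin : carrier -> carrier -> carrier;
  bmeet : carrier -> carrier -> carrier;
  bcompl : carrier -> carrier;
  bbot : carrier;
  btop : carrier;
  bbox : carrier -> carrier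
}.

Definition ble (A : BAM) (a b : carrier A) : Prop := bmeet A a b = a.

Definition is_BAM (A : BAM) : Prop :=
  (forall a b, bjoin A a b = bjoin A b a) /\
  (forall a b, bmeet A a b = bmeet A b a) /\
  (forall a b c, bjoin A a (bjoin A b c) = bjoin A (bjoin A a b) c) /\
  (forall a b c, bmeet A a (bmeet A b c) = bmeet A (bmeet A a b) c) /\
  (forall a b, bjoin A a (bmeet A a b) = a) /\
  (forall a b, bmeet A a (bjoin A a b) = a) /\
  (forall a b c, bmeet A a (bjoin A b c) = bjoin A (bmeet A a b) (bmeet A a c)) /\
  (forall a, bjoin A a (bcompl A a) = btop A) /\
  (forall a, bmeet A a (bcompl A a) = bbot A) /\
  (forall a b, ble A a b -> ble A (bbox A a) (bbox A b)).

Definition is_hom (A B : BAM) (f : carrier A -> carrier B) : Prop :=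
  (forall a b, f (bjoin A a b) = bjoin B (f a) (f b)) /\
  (forall a b, f (bmeet A a b) = bmeet B (f a) (f b)) /\
  (forall a, f (bcompl A a) = bcompl B (f a)) /\
  f (bbot A) = bbot B /\ f (btop A) = btop B /\
  (forall a, f (bbox A a) = bbox B (f a)).

Definition embeds (A B : BAM) : Prop :=
  exists f : carrier A -> carrier B, is_hom A B f /\ (forall a b, f a = f b -> a = b).

Definition cplx (F : Frame) : BAM := {|
  carrier := fW F -> Prop;
  bjoin := fun X Y w => X w \/ Y w;
  bmeet := fun X Y w => X w /\ Y w;
  bcompl := fun X w => ~ X w;
  bbot := fun _ => False;
  btop := fun _ => True;
  bbox := fun X w => fN F w X
|}.

Definition closed_under_sub (C : BAM -> Prop) : Prop :=
  forall A B, C B -> embeds A B -> C A.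

Definition S_class (K : Frame -> Prop) (A : BAM) : Prop :=
  forall C : BAM -> Prop,
    (forall F, K F -> C (cplx F)) -> closed_under_sub C -> C A.

Definition is_uf (A : BAM) (u : carrier A -> Prop) : Prop :=
  u (btop A) /\ ~ u (bbot A) /\
  (forall a b, u a -> u b -> u (bmeet A a b)) /\
  (forall a b, u a -> ble A a b -> u b) /\
  (forall a, u a \/ u (bcompl A a)).

Definition Uf (A : BAM) : Type := { u : carrier A -> Prop | is_uf A u }.

Definition bracket (A : BAM) (a : carrier A) : Uf A -> Prop :=
  fun u => proj1_sig u a.

Definition closed_set (A : BAM) (K : Uf A -> Prop) : Prop :=
  exists D : carrier A -> Prop, forall u, K u <-> (forall a, D a -> bracket A a u).

Definition box_sigma (A : BAM) (X : Uf A -> Prop) : Uf A -> Prop :=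
  fun u => exists K, closed_set A K /\ subset K X /\
             (forall a, subset K (bracket A a) -> bracket A (bbox A a) u).

Definition can_ext (A : BAM) : BAM := {|
  carrier := Uf A -> Prop;
  bjoin := fun X Y w => X w \/ Y w;
  bmeet := fun X Y w => X w /\ Y w;
  bcompl := fun X w => ~ X w;
  bbot := fun _ => False;
  btop := fun _ => True;
  bbox := box_sigma A
|}.

Definition is_set_uf {I : Type} (U : (I -> Prop) -> Prop) : Prop :=
  U (fun _ => True) /\ ~ U (fun _ => False) /\
  (forall X Y, U X -> U Y -> U (fun i => X i /\ Y i)) /\
  (forall X Y, U X -> subset X Y -> U Y) /\
  (forall X, U X \/ U (fun i => ~ X i)).

(* B is (isomorphic to) the ultraproduct prod_i A_i / U : there is a
   surjective homomorphism from the direct product onto B whose kernel is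
   the congruence  x ~ y  iff  {i | x i = y i} in U. *)
Definition is_ultraproduct {I : Type} (U : (I -> Prop) -> Prop)
    (A : I -> BAM) (B : BAM) : Prop :=
  exists pi : (forall i, carrier (A i)) -> carrier B,
    (forall b, exists x, pi x = b) /\
    (forall x y, pi x = pi y <-> U (fun i => x i = y i)) /\
    (forall x y, pi (fun i => bjoin (A i) (x i) (y i)) = bjoin B (pi x) (pi y)) /\
    (forall x y, pi (fun i => bmeet (A i) (x i) (y i)) = bmeet B (pi x) (pi y)) /\
    (forall x, pi (fun i => bcompl (A i) (x i)) = bcompl B (pi x)) /\
    pi (fun i => bbot (A i)) = bbot B /\
    pi (fun i => btop (A i)) = btop B /\
    (forall x, pi (fun i => bbox (A i) (x i)) = bbox B (pi x)).

(* Main.v *)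
Require Import Defs.
From Stdlib Require Import List Arith Lia Classical ClassicalEpsilon FunctionalExtensionality PropExtensionality ProofIrrelevance.
Import ListNotations.

Lemma choice_dep {A : Type} {B : A -> Type} (P : forall a, B a -> Prop) :
  (forall a, exists b, P a b) -> exists f : (forall a, B a), forall a, P a (f a).
Proof.
  intros H. exists (fun a => proj1_sig (constructive_indefinite_description _ (H a))).
  intros a. exact (proj2_sig (constructive_indefinite_description _ (H a))).
Qed.

Lemma pext {P Q : Prop} : (P <-> Q) -> P = Q.
Proof. apply propositional_extensionality. Qed.

Lemma fext_iff {X : Type} (P Q : X -> Prop) : (forall x, P x <-> Q x) -> P = Q.
Proof. intros H. apply functional_extensionality. intros x. apply pext, H. Qed.

Lemma sig_ext {X : Type} {P : X -> Prop} (a b : {x | P x}) :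
  proj1_sig a = proj1_sig b -> a = b.
Proof.
  destruct a as [a Ha], b as [b Hb]. simpl. intros e. subst b.
  f_equal. apply proof_irrelevance.
Qed.

Section UF.
Variable I : Type.
Variable U : (I -> Prop) -> Prop.
Hypothesis HU : is_set_uf U.

Lemma uf_true : U (fun _ => True).
Proof. destruct HU as [H _]. exact H. Qed.
Lemma uf_nfalse : ~ U (fun _ => False).
Proof. destruct HU as [_ [H _]]. exact H. Qed.
Lemma uf_mono (X Y : I -> Prop) : U X -> (forall i, X i -> Y i) -> U Y.
Proof. destruct HU as [_ [_ [_ [H _]]]]. intros; eapply H; eauto. Qed.
Lemma uf_and (X Y : I -> Prop) : U X -> U Y -> U (fun i => X i /\ Y i).
Proof. destruct HU as [_ [_ [H _]]]. auto. Qed.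
Lemma uf_em (X : I -> Prop) : U X \/ U (fun i => ~ X i).
Proof. destruct HU as [_ [_ [_ [_ H]]]]. auto. Qed.
Lemma uf_all (X : I -> Prop) : (forall i, X i) -> U X.
Proof. intros H. apply (uf_mono _ _ uf_true). auto. Qed.
Lemma uf_ex (X : I -> Prop) : U X -> exists i, X i.
Proof.
  intros H. apply NNPP. intros C. apply uf_nfalse. apply (uf_mono _ _ H).
  intros i Hi. apply C. eauto.
Qed.
Lemma uf_ext (X Y : I -> Prop) : (forall i, X i <-> Y i) -> (U X <-> U Y).
Proof. intros H; split; intros HX; [apply (uf_mono X Y HX)|apply (uf_mono Y X HX)]; firstorder. Qed.
Lemma uf_and_iff (X Y : I -> Prop) : U (fun i => X i /\ Y i) <-> U X /\ U Y.
Proof.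
  split. intros H; split; [apply (uf_mono _ _ H)|apply (uf_mono _ _ H)]; tauto.
  intros [A B]; apply uf_and; auto.
Qed.
Lemma uf_not (X : I -> Prop) : U (fun i => ~ X i) <-> ~ U X.
Proof.
  split.
  - intros H1 H2. apply uf_nfalse. apply (uf_mono _ _ (uf_and _ _ H1 H2)). tauto.
  - intros H. destruct (uf_em X); tauto.
Qed.
Lemma uf_or (X Y : I -> Prop) : U (fun i => X i \/ Y i) <-> U X \/ U Y.
Proof.
  split.
  - intros H. destruct (uf_em X) as [HX|HX]; [left; auto|].
    right. apply (uf_mono _ _ (uf_and _ _ H HX)). tauto.
  - intros [H|H]; [apply (uf_mono _ _ H)|apply (uf_mono _ _ H)]; tauto.
Qed.
Lemma uf_const (P : Prop) : U (fun _ => P) <-> P.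
Proof.
  split. intros H. destruct (uf_ex _ H); auto. intros; apply uf_all; auto.
Qed.
Lemma uf_imp (X Y : I -> Prop) : U X -> U (fun i => X i -> Y i) -> U Y.
Proof. intros A B. apply (uf_mono _ _ (uf_and _ _ A B)). tauto. Qed.
Lemma uf_fin (n : nat) (X : nat -> I -> Prop) :
  (forall k, k <= n -> U (X k)) -> U (fun i => forall k, k <= n -> X k i).
Proof.
  induction n; intros H.
  - apply (uf_mono _ _ (H 0 (le_n 0))). intros i Hi k Hk. inversion Hk; subst; auto.
  - apply (uf_mono _ _ (uf_and _ _ (IHn (fun k Hk => H k (le_S _ _ Hk))) (H (S n) (le_n _)))).
    intros i [A B] k Hk. inversion Hk; subst; auto.
Qed.
End UF.

Section Quot.
Variable T : Type.
Variable R : T -> T -> Prop.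
Hypothesis Rrefl : forall t, R t t.
Hypothesis Rsym : forall t t', R t t' -> R t' t.
Hypothesis Rtrans : forall t t' t'', R t t' -> R t' t'' -> R t t''.

Definition quot := {P : T -> Prop | exists t, P = R t}.
Definition cls (t : T) : quot := exist _ (R t) (ex_intro _ t eq_refl).
Definition rep (q : quot) : T :=
  proj1_sig (constructive_indefinite_description _ (proj2_sig q)).

Lemma cls_rep q : cls (rep q) = q.
Proof.
  unfold rep. destruct (constructive_indefinite_description _ (proj2_sig q)) as [t Ht].
  simpl. apply sig_ext. simpl. symmetry; exact Ht.
Qed.

Lemma cls_eq t t' : cls t = cls t' <-> R t t'.
Proof.
  split.
  - intros e. assert (E : R t = R t') by (apply (f_equal (@proj1_sig _ _) e)).
    rewrite E. apply Rrefl.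
  - intros H. apply sig_ext. simpl. apply fext_iff. intros x; split; intros Hx.
    + apply Rtrans with t; auto.
    + apply Rtrans with t'; auto.
Qed.

Lemma rep_cls t : R (rep (cls t)) t.
Proof.
  apply Rsym. apply cls_eq. rewrite cls_rep. reflexivity.
Qed.

Lemma quot_ind' (P : quot -> Prop) : (forall t, P (cls t)) -> forall q, P q.
Proof. intros H q. rewrite <- (cls_rep q). apply H. Qed.
End Quot.
Arguments cls {T R}.
Arguments rep {T R}.
From mathcomp Require classical_sets filter.

Lemma fine_uf (T : Type) : exists U : (list T -> Prop) -> Prop,
  is_set_uf U /\ forall t, U (fun l => In t l).
Proof.
  set (F := fun X : list T -> Prop => exists l0, forall l, incl l0 l -> X l).
  assert (PF : mathcomp.classical.filter.ProperFilter F).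
  { constructor.
    - intros [l0 H]. apply (H l0). apply incl_refl.
    - constructor.
      + exists nil. intros; exact I.
      + intros A B [l0 H0] [l1 H1]. exists (l0 ++ l1). intros l Hl.
        split; [apply H0|apply H1]; intros x Hx; apply Hl; apply in_or_app; auto.
      + intros P Q HPQ [l0 H]. exists l0. intros l Hl. apply HPQ, H, Hl. }
  destruct (mathcomp.classical.filter.ultraFilterLemma PF) as [G [GU FG]].
  exists G. split.
  - split; [|split; [|split; [|split]]].
    + apply (@mathcomp.classical.filter.filterT _ G). apply GU.
    + apply (@mathcomp.classical.filter.filter_not_empty _ G). apply GU.
    + intros X Y HX HY. apply (@mathcomp.classical.filter.filterI _ G); auto. apply GU.
    + intros X Y HX HXY. refine (@mathcomp.classical.filter.filterS _ G _ X Y _ HX). exact HXY.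
    + intros X. apply (mathcomp.classical.filter.in_ultra_setVsetC X GU).
  - intros t. apply FG. exists [t]. intros l Hl. apply Hl. left; reflexivity.
Qed.

Lemma coinc (F : Frame) phi : forall g g' : nat -> fW F,
  (forall z, free phi z -> g z = g' z) -> (sat F g phi <-> sat F g' phi).
Proof.
  induction phi as [x y|p IH|p IH q IH2|p IH q IH2|x p IH|x y p IH]; intros g g' H; simpl in *.
  - rewrite (H x), (H y) by auto. tauto.
  - rewrite (IH g g' H). tauto.
  - rewrite (IH g g'), (IH2 g g') by auto. tauto.
  - rewrite (IH g g'), (IH2 g g') by auto. tauto.
  - assert (C : forall v z, free p z -> upd g x v z = upd g' x v z).
    { intros v z Hz. unfold upd. destruct (Nat.eqb z x) eqn:E; auto.
      apply H. split; auto. apply Nat.eqb_neq; auto. }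
    split; intros [v Hv]; exists v.
    + apply (proj1 (IH _ _ (C v)) Hv).
    + apply (proj2 (IH _ _ (C v)) Hv).
  - rewrite (H x) by auto.
    assert (E : (fun v => sat F (upd g y v) p) = (fun v => sat F (upd g' y v) p)).
    { apply fext_iff. intros v. apply IH. intros z Hz. unfold upd.
      destruct (Nat.eqb z y) eqn:E; auto. apply H. right. split; auto. apply Nat.eqb_neq; auto. }
    rewrite E. tauto.
Qed.
Lemma class_mono c F : in_class c F -> monotonic F.
Proof.
  destruct c; simpl; intros H.
  - exact H.
  - exact (proj1 H).
  - intros w X Y HX HXY. destruct (H w) as [E|[X0 HX0]].
    + exfalso; eapply E; eauto.
    + apply HX0. apply HX0 in HX. intros v Hv; auto.
  - exact (proj1 (proj1 H)).
  - intros w X Y HX HXY. destruct (H w) as [X0 HX0].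
    apply HX0. apply HX0 in HX. intros v Hv; auto.
Qed.

Lemma upd_app {I : Type} {T : I -> Type} (G : nat -> forall i, T i) x (h : forall i, T i) i :
  (fun k => upd G x h k i) = upd (fun k => G k i) x (h i).
Proof.
  apply functional_extensionality. intros k. unfold upd. destruct (Nat.eqb k x); reflexivity.
Qed.

Section UP.
Variable I : Type.
Variable U : (I -> Prop) -> Prop.
Hypothesis HU : is_set_uf U.
Variable F : I -> Frame.

Definition Prod := forall i, fW (F i).
Definition Req (x y : Prod) : Prop := U (fun i => x i = y i).
Lemma Req_refl x : Req x x.
Proof. apply (uf_all _ _ HU); auto. Qed.
Lemma Req_sym x y : Req x y -> Req y x.
Proof. intros H. apply (uf_mono _ _ HU _ _ H). auto. Qed.
Lemma Req_trans x y z : Req x y -> Req y z -> Req x z.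
Proof. intros H1 H2. apply (uf_mono _ _ HU _ _ (uf_and _ _ HU _ _ H1 H2)). intros i [-> ->]; auto. Qed.

Definition UPW := quot Prod Req.
Definition UPN (w : UPW) (Y : UPW -> Prop) : Prop :=
  exists z : forall i, fW (F i) -> Prop,
    U (fun i => fN (F i) (rep w i) (z i)) /\ forall h, U (fun i => z i (h i)) -> Y (cls h).

Definition dprod : Prod := fun i => epsilon (fW_inh (F i)) (fun _ => True).
Lemma UPW_inh : inhabited UPW.
Proof. constructor. exact (cls dprod). Qed.

Definition UPF : Frame := mkFrame UPW UPN UPW_inh.

Lemma cls_eqU (h h' : Prod) : @cls _ Req h = cls h' <-> Req h h'.
Proof. apply cls_eq; [exact Req_refl|exact Req_sym|exact Req_trans]. Qed.
Lemma rep_clsU (h : Prod) : Req (rep (@cls _ Req h)) h.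
Proof. apply rep_cls; [exact Req_refl|exact Req_sym|exact Req_trans]. Qed.

Lemma ae_rw (x y : Prod) (P : forall i, fW (F i) -> Prop) :
  Req x y -> (U (fun i => P i (x i)) <-> U (fun i => P i (y i))).
Proof.
  intros H; split; intros H2.
  - apply (uf_mono _ _ HU _ _ (uf_and _ _ HU _ _ H H2)). intros i [e Hi]. rewrite <- e; auto.
  - apply (uf_mono _ _ HU _ _ (uf_and _ _ HU _ _ H H2)). intros i [e Hi]. rewrite e; auto.
Qed.

Lemma upd_appP (G : nat -> Prod) x (h : Prod) i :
  (fun k => upd G x h k i) = upd (fun k => G k i) x (h i).
Proof.
  apply functional_extensionality. intros k. unfold upd. destruct (Nat.eqb k x); reflexivity.
Qed.

Lemma UPN_ext w (Y Y' : UPW -> Prop) : (forall v, Y v <-> Y' v) -> UPN w Y -> UPN w Y'.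
Proof. intros E [z [H1 H2]]. exists z. split; auto. intros h Hh. apply E; auto. Qed.

Lemma box_lemma (Hm : forall i, monotonic (F i)) (H : Prod) (S : forall i, fW (F i) -> Prop) :
  UPN (cls H) (fun v => U (fun i => S i (rep v i))) <-> U (fun i => fN (F i) (H i) (S i)).
Proof.
  split.
  - intros [z [Hz1 Hz2]].
    apply (ae_rw _ _ (fun i w => fN (F i) w (z i)) (rep_clsU H)) in Hz1.
    assert (Hsub : U (fun i => forall w, z i w -> S i w)).
    { destruct (uf_em _ _ HU (fun i => forall w, z i w -> S i w)) as [ok|bad]; [exact ok|].
      exfalso.
      assert (Hc : forall i, exists w : fW (F i), (~ forall w, z i w -> S i w) -> z i w /\ ~ S i w).
      { intros i. destruct (classic (exists w, z i w /\ ~ S i w)) as [[w Hw]|N].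
        - exists w; auto.
        - destruct (fW_inh (F i)) as [w0]. exists w0. intros C; exfalso; apply C.
          intros w Hw. apply NNPP. intro; apply N; eauto. }
      destruct (choice_dep _ Hc) as [h Hh].
      assert (A1 : U (fun i => z i (h i))).
      { apply (uf_mono _ _ HU _ _ bad). intros i Hi. apply (Hh i Hi). }
      assert (A2 : U (fun i => ~ S i (h i))).
      { apply (uf_mono _ _ HU _ _ bad). intros i Hi. apply (Hh i Hi). }
      specialize (Hz2 h A1).
      apply (ae_rw _ _ S (rep_clsU h)) in Hz2.
      apply (uf_not _ _ HU) in A2. auto. }
    apply (uf_mono _ _ HU _ _ (uf_and _ _ HU _ _ Hz1 Hsub)).
    intros i [A B]. eapply Hm; eauto.
  - intros H1. exists S. split.
    + apply (ae_rw _ _ (fun i w => fN (F i) w (S i)) (rep_clsU H)). exact H1.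
    + intros h Hh. apply (ae_rw _ _ S (rep_clsU h)). exact Hh.
Qed.

Lemma Los (Hm : forall i, monotonic (F i)) : forall phi (g : nat -> UPW) (G : nat -> Prod),
  (forall k, g k = cls (G k)) ->
  (sat UPF g phi <-> U (fun i => sat (F i) (fun k => G k i) phi)).
Proof.
  induction phi as [x y|p IH|p IH q IH2|p IH q IH2|x p IH|x y p IH]; intros g G HG; simpl.
  - rewrite !HG. rewrite cls_eqU. reflexivity.
  - rewrite (IH g G HG). symmetry. apply (uf_not _ _ HU).
  - rewrite (IH g G HG), (IH2 g G HG). symmetry. apply (uf_and_iff _ _ HU).
  - rewrite (IH g G HG), (IH2 g G HG). symmetry. apply (uf_or _ _ HU).
  - split.
    + intros [v Hv]. apply (IH (upd g x v) (upd G x (rep v))) in Hv.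
      * apply (uf_mono _ _ HU _ _ Hv). intros i Hi. exists (rep v i).
        rewrite upd_appP in Hi. exact Hi.
      * intros k. unfold upd. destruct (Nat.eqb k x); [symmetry; apply cls_rep| apply HG].
    + intros H.
      assert (Hc : forall i, exists w : fW (F i),
        (exists w', sat (F i) (upd (fun k => G k i) x w') p) -> sat (F i) (upd (fun k => G k i) x w) p).
      { intros i. destruct (classic (exists w', sat (F i) (upd (fun k => G k i) x w') p)) as [[w Hw]|N].
        - exists w; auto.
        - destruct (fW_inh (F i)) as [w0]. exists w0. intros C; contradiction. }
      destruct (choice_dep _ Hc) as [h Hh].
      exists (cls h). apply (IH _ (upd G x h)).
      * intros k. unfold upd. destruct (Nat.eqb k x); [reflexivity| apply HG].
      * apply (uf_mono _ _ HU _ _ H). intros i Hi. rewrite upd_appP. apply Hh, Hi.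
  - assert (E : forall v, sat UPF (upd g y v) p <->
        U (fun i => (fun i w => sat (F i) (upd (fun k => G k i) y w) p) i (rep v i))).
    { intros v. rewrite (IH _ (upd G y (rep v))).
      - apply (uf_ext _ _ HU). intros i. rewrite upd_appP. reflexivity.
      - intros k. unfold upd. destruct (Nat.eqb k y); [symmetry; apply cls_rep| apply HG]. }
    change (UPN (g x) (fun v => sat UPF (upd g y v) p) <->
            U (fun i => fN (F i) (G x i) (fun v => sat (F i) (upd (fun k => G k i) y v) p))).
    rewrite <- (box_lemma Hm (G x) (fun i w => sat (F i) (upd (fun k => G k i) y w) p)).
    rewrite HG. split; apply UPN_ext; intros v; rewrite E; tauto.
Qed.

Lemma UP_models (Hm : forall i, monotonic (F i)) phi :
  (forall i, models (F i) phi) -> models UPF phi.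
Proof.
  intros H g. apply (Los Hm phi g (fun k => rep (g k))).
  - intros k. symmetry. apply cls_rep.
  - apply (uf_all _ _ HU); auto. intros i. apply H.
Qed.

Lemma UP_mono : monotonic UPF.
Proof.
  intros w X Y [z [H1 H2]] HXY. exists z. split; auto.
Qed.

Lemma UP_fin : (forall i, fin_inter_closed (F i)) -> fin_inter_closed UPF.
Proof.
  intros Hf w n X H.
  assert (Hc : forall k, exists z : forall i, fW (F i) -> Prop, k <= n ->
     U (fun i => fN (F i) (rep w i) (z i)) /\ forall h, U (fun i => z i (h i)) -> X k (cls h)).
  { intros k. destruct (le_lt_dec k n) as [Hk|Hk].
    - destruct (H k Hk) as [z Hz]. exists z; auto.
    - exists (fun _ _ => True). intros; lia. }
  destruct (choice_dep _ Hc) as [Z HZ].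
  exists (fun i v => forall k, k <= n -> Z k i v). split.
  - assert (A : U (fun i => forall k, k <= n -> fN (F i) (rep w i) (Z k i))).
    { apply (uf_fin _ _ HU). intros k Hk. apply (HZ k Hk). }
    apply (uf_mono _ _ HU _ _ A). intros i Hi. apply (Hf i (rep w i) n (fun k => Z k i)). exact Hi.
  - intros h Hh k Hk. apply (HZ k Hk).
    apply (uf_mono _ _ HU _ _ Hh). intros i Hi. apply Hi, Hk.
Qed.

Lemma principal_ae w (X0 : forall i, fW (F i) -> Prop) :
  U (fun i => forall X, fN (F i) (rep w i) X <-> subset (X0 i) X) ->
  forall Y, UPN w Y <-> subset (fun v => U (fun i => X0 i (rep v i))) Y.
Proof.
  intros HP Y. split.
  - intros [z [H1 H2]] v Hv.
    rewrite <- (cls_rep _ _ v). apply H2.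
    apply (uf_mono _ _ HU _ _ (uf_and _ _ HU _ _ (uf_and _ _ HU _ _ HP H1) Hv)).
    intros i [[A B] C]. apply A in B. apply B, C.
  - intros Hs. exists X0. split.
    + apply (uf_mono _ _ HU _ _ HP). intros i Hi. apply Hi. intros v; auto.
    + intros h Hh. apply Hs. apply (ae_rw _ _ X0 (rep_clsU h)). exact Hh.
Qed.

Lemma UP_class c : (forall i, in_class c (F i)) -> in_class c UPF.
Proof.
  intros Hc. destruct c; simpl in *.
  - apply UP_mono.
  - split; [apply UP_mono| apply UP_fin; intros i; apply (proj2 (Hc i))].
  - intros w.
    destruct (uf_em _ _ HU (fun i => forall X, ~ fN (F i) (rep w i) X)) as [E|E].
    + left. intros X [z [H1 H2]]. destruct (uf_ex _ _ HU _ (uf_and _ _ HU _ _ E H1)) as [i [A B]].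
      eapply A; eauto.
    + right.
      assert (Hc' : forall i, exists X0 : fW (F i) -> Prop, ~ (forall X, ~ fN (F i) (rep w i) X) ->
               forall X, fN (F i) (rep w i) X <-> subset X0 X).
      { intros i. destruct (Hc i (rep w i)) as [A|[X0 B]].
        - exists (fun _ => True). tauto.
        - exists X0. auto. }
      destruct (choice_dep _ Hc') as [X0 HX0].
      exists (fun v => U (fun i => X0 i (rep v i))). apply principal_ae.
      apply (uf_mono _ _ HU _ _ E). intros i Hi. apply HX0, Hi.
  - split; [split; [apply UP_mono| apply UP_fin; intros i; apply (proj1 (Hc i))]|].
    intros w.
    assert (Hc' : forall i, exists X : fW (F i) -> Prop, fN (F i) (rep w i) X).
    { intros i. apply (proj2 (Hc i)). }
    destruct (choice_dep _ Hc') as [X HX].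
    exists (fun _ => True). exists X. split; auto. apply (uf_all _ _ HU); auto.
  - intros w.
    assert (Hc' : forall i, exists X0 : fW (F i) -> Prop,
               forall X, fN (F i) (rep w i) X <-> subset X0 X).
    { intros i. apply (Hc i (rep w i)). }
    destruct (choice_dep _ Hc') as [X0 HX0].
    exists (fun v => U (fun i => X0 i (rep v i))). apply principal_ae.
    apply (uf_all _ _ HU); auto.
Qed.
End UP.
Lemma id_hom F : is_hom (cplx F) (cplx F) (fun x => x).
Proof. repeat split. Qed.

Lemma hom_comp A B C f g : is_hom A B f -> is_hom B C g -> is_hom A C (fun x => g (f x)).
Proof.
  intros [f1 [f2 [f3 [f4 [f5 f6]]]]] [g1 [g2 [g3 [g4 [g5 g6]]]]].
  repeat split; intros; try rewrite f1; try rewrite f2; try rewrite f3; try rewrite f6;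
  try rewrite f4; try rewrite f5; auto.
Qed.

Lemma S_class_iff K A : S_class K A <-> exists F, K F /\ embeds A (cplx F).
Proof.
  split.
  - intros H. apply H.
    + intros F HF. exists F. split; auto. exists (fun x => x). split; [apply id_hom|auto].
    + intros A' B' [F [HF [g [Hg Hi]]]] [f [Hf Hfi]]. exists F. split; auto.
      exists (fun x => g (f x)). split; [eapply hom_comp; eauto|]. auto.
  - intros [F [HF Hemb]] C HC Hsub. apply (Hsub A (cplx F)); auto.
Qed.

Section Part2.
Variable c : FrameClass.
Variable T : formula -> Prop.

Lemma part2 (I : Type) (U : (I -> Prop) -> Prop) (A : I -> BAM) (B : BAM) :
  is_set_uf U -> (forall i, S_class (elem_class c T) (A i)) ->
  is_ultraproduct U A B -> S_class (elem_class c T) B.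
Proof.
  intros HU HA [pi [Hsurj [Hker [Hj [Hm [Hc [Hb [Ht Hbox]]]]]]]].
  assert (HP : forall i, exists p : {F : Frame & carrier (A i) -> fW F -> Prop},
     elem_class c T (projT1 p) /\ is_hom (A i) (cplx (projT1 p)) (projT2 p) /\
     (forall a b, projT2 p a = projT2 p b -> a = b)).
  { intros i. destruct (proj1 (S_class_iff _ _) (HA i)) as [F [HF [f [Hf Hfi]]]].
    exists (existT _ F f). simpl. auto. }
  destruct (choice_dep _ HP) as [P HPP].
  set (FF := fun i => projT1 (P i)).
  set (ff := fun i => projT2 (P i) : carrier (A i) -> fW (FF i) -> Prop).
  assert (Hcl : forall i, elem_class c T (FF i)) by (intros i; apply HPP).
  assert (Hh : forall i, is_hom (A i) (cplx (FF i)) (ff i)) by (intros i; apply HPP).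
  assert (Hinj : forall i a b, ff i a = ff i b -> a = b) by (intros i; apply HPP).
  assert (Hmono : forall i, monotonic (FF i)) by (intros i; apply (class_mono c), Hcl).
  destruct (choice_dep (fun (b : carrier B) x => pi x = b) Hsurj) as [s Hs].
  apply S_class_iff. exists (UPF I U FF). split.
  { split.
    - apply UP_class; auto. intros i; apply Hcl.
    - intros phi Hphi. apply UP_models; auto. intros i; apply Hcl, Hphi. }
  set (e := fun (b : carrier B) (v : UPW I U FF) => U (fun i => ff i (s b i) (rep v i))).
  assert (eK : forall b x, pi x = b -> forall v, e b v <-> U (fun i => ff i (x i) (rep v i))).
  { intros b x Hx v. unfold e.
    assert (E : U (fun i => s b i = x i)) by (apply Hker; rewrite Hs; auto).
    split; intros H; apply (uf_mono _ _ HU _ _ (uf_and _ _ HU _ _ E H)); intros i [e1 e2];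
      [rewrite <- e1| rewrite e1]; auto. }
  exists e. split.
  - repeat split.
    + intros b b'. apply fext_iff. intros v.
      rewrite (eK _ (fun i => bjoin (A i) (s b i) (s b' i))); [|rewrite Hj, !Hs; auto].
      simpl. unfold e. rewrite <- (uf_or _ _ HU). apply (uf_ext _ _ HU). intros i.
      destruct (Hh i) as [h1 _]. rewrite h1. simpl. tauto.
    + intros b b'. apply fext_iff. intros v.
      rewrite (eK _ (fun i => bmeet (A i) (s b i) (s b' i))); [|rewrite Hm, !Hs; auto].
      simpl. unfold e. rewrite <- (uf_and_iff _ _ HU). apply (uf_ext _ _ HU). intros i.
      destruct (Hh i) as [_ [h2 _]]. rewrite h2. simpl. tauto.
    + intros b. apply fext_iff. intros v.
      rewrite (eK _ (fun i => bcompl (A i) (s b i))); [|rewrite Hc, !Hs; auto].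
      simpl. unfold e. rewrite <- (uf_not _ _ HU). apply (uf_ext _ _ HU). intros i.
      destruct (Hh i) as [_ [_ [h3 _]]]. rewrite h3. simpl. tauto.
    + apply fext_iff. intros v.
      rewrite (eK _ (fun i => bbot (A i))); [|auto].
      simpl. rewrite <- (uf_const _ _ HU False). apply (uf_ext _ _ HU). intros i.
      destruct (Hh i) as [_ [_ [_ [h4 _]]]]. rewrite h4. simpl. tauto.
    + apply fext_iff. intros v.
      rewrite (eK _ (fun i => btop (A i))); [|auto].
      simpl. rewrite <- (uf_const _ _ HU True). apply (uf_ext _ _ HU). intros i.
      destruct (Hh i) as [_ [_ [_ [_ [h5 _]]]]]. rewrite h5. simpl. tauto.
    + intros b. apply fext_iff. intros v.
      rewrite (eK _ (fun i => bbox (A i) (s b i))); [|rewrite Hbox, !Hs; auto].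
      pose proof (box_lemma I U HU FF Hmono (rep v) (fun i => ff i (s b i))) as BL.
      rewrite cls_rep in BL.
      change (U (fun i => ff i (bbox (A i) (s b i)) (rep v i)) <->
              UPN I U FF v (fun v' => U (fun i => ff i (s b i) (rep v' i)))).
      rewrite BL. apply (uf_ext _ _ HU). intros i.
      destruct (Hh i) as [_ [_ [_ [_ [_ h6]]]]]. rewrite h6. simpl. tauto.
  - intros b b' Ebb.
    assert (E : U (fun i => s b i = s b' i)).
    { apply NNPP. intros N. apply (uf_not _ _ HU) in N.
      assert (Hc' : forall i, exists w : fW (FF i), s b i <> s b' i ->
                 ~ (ff i (s b i) w <-> ff i (s b' i) w)).
      { intros i. destruct (classic (s b i = s b' i)) as [E|E].
        - destruct (fW_inh (FF i)) as [w0]. exists w0. tauto.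
        - destruct (classic (exists w, ~ (ff i (s b i) w <-> ff i (s b' i) w))) as [[w Hw]|N2].
          + exists w; auto.
          + exfalso. apply E. apply Hinj. apply fext_iff. intros w.
            apply NNPP. intros C. apply N2. eauto. }
      destruct (choice_dep _ Hc') as [h Hhh].
      assert (D : U (fun i => ~ (ff i (s b i) (h i) <-> ff i (s b' i) (h i)))).
      { apply (uf_mono _ _ HU _ _ N). intros i Hi. apply Hhh, Hi. }
      assert (Ev : e b (cls h) <-> e b' (cls h)) by (rewrite Ebb; tauto).
      unfold e in Ev.
      rewrite (ae_rw I U HU FF _ _ (fun i w => ff i (s b i) w) (rep_clsU I U HU FF h)) in Ev.
      rewrite (ae_rw I U HU FF _ _ (fun i w => ff i (s b' i) w) (rep_clsU I U HU FF h)) in Ev.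
      destruct (uf_em _ _ HU (fun i => ff i (s b i) (h i))) as [X|X].
      + pose proof (proj1 Ev X) as Y.
        destruct (uf_ex _ _ HU _ (uf_and _ _ HU _ _ D (uf_and _ _ HU _ _ X Y))) as [i [Q [R1 R2]]].
        tauto.
      + assert (Y : U (fun i => ~ ff i (s b' i) (h i))).
        { apply (uf_not _ _ HU). intros Y. apply (uf_not _ _ HU) in X. apply X, Ev, Y. }
        destruct (uf_ex _ _ HU _ (uf_and _ _ HU _ _ D (uf_and _ _ HU _ _ X Y))) as [i [Q [R1 R2]]].
        tauto. }
    rewrite <- (Hs b), <- (Hs b'). apply Hker. exact E.
Qed.
End Part2.
Section Tr.
Variable P : nat -> Type.
Variable step : forall m, P m -> P (S m).
Variable dflt : forall m, P m.
Fixpoint tr (n m : nat) (x : P n) {struct m} : P m :=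
  match m as m0 return P m0 with
  | 0 => match Nat.eq_dec n 0 with left e => eq_rect n P x 0 e | right _ => dflt 0 end
  | S m' => match Nat.eq_dec n (S m') with
            | left e => eq_rect n P x (S m') e
            | right _ => step m' (tr n m' x) end
  end.
Lemma tr_refl n x : tr n n x = x.
Proof.
  destruct n as [|n]; cbv beta iota delta [tr].
  - destruct (Nat.eq_dec 0 0) as [e|e]; [|contradiction].
    rewrite (Eqdep_dec.UIP_refl_nat 0 e); reflexivity.
  - destruct (Nat.eq_dec (S n) (S n)) as [e|e]; [|contradiction].
    rewrite (Eqdep_dec.UIP_refl_nat (S n) e); reflexivity.
Qed.
Lemma tr_S n m x : n <= m -> tr n (S m) x = step m (tr n m x).
Proof. intros H. cbv beta iota delta [tr]. destruct (Nat.eq_dec n (S m)); [lia|reflexivity]. Qed.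
Lemma tr_trans n m k x : n <= m -> m <= k -> tr m k (tr n m x) = tr n k x.
Proof.
  induction k as [|k IH]; intros Hnm Hmk.
  - assert (m = 0) by lia; assert (n = 0) by lia; subst. rewrite !tr_refl; reflexivity.
  - destruct (Nat.eq_dec m (S k)) as [e|ne].
    + subst m. rewrite tr_refl; reflexivity.
    + rewrite tr_S by lia. rewrite tr_S by lia. rewrite IH by lia; reflexivity.
Qed.
End Tr.

Section Part1.
Variable c : FrameClass.
Variable F0 : Frame.
Hypothesis Hc0 : in_class c F0.
Definition I0 := list (fW F0 -> Prop).
Variable U0 : (I0 -> Prop) -> Prop.
Hypothesis HU0 : is_set_uf U0.
Hypothesis Hfine : forall S, U0 (fun l => In S l).

Fixpoint Fn (n : nat) : Frame :=
  match n with 0 => F0 | S m => UPF I0 U0 (fun _ => Fn m) end.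
Definition Wn (n : nat) : Type := fW (Fn n).

Lemma Fn_class n : in_class c (Fn n).
Proof. induction n; simpl; auto. apply UP_class; auto. Qed.
Lemma Fn_mono n : monotonic (Fn n).
Proof. apply (class_mono c), Fn_class. Qed.

Definition j (n : nat) (x : Wn n) : Wn (S n) :=
  @cls (Prod I0 (fun _ => Fn n)) (Req I0 U0 (fun _ => Fn n)) (fun _ => x).
Definition L (n : nat) (Z : Wn n -> Prop) : Wn (S n) -> Prop :=
  fun v => U0 (fun l => Z (@rep (Prod I0 (fun _ => Fn n)) (Req I0 U0 (fun _ => Fn n)) v l)).

Lemma rep_j n (x : Wn n) :
  U0 (fun l => @rep (Prod I0 (fun _ => Fn n)) (Req I0 U0 (fun _ => Fn n)) (j n x) l = x).
Proof. apply (rep_clsU I0 U0 HU0 (fun _ => Fn n)). Qed.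

Lemma j_inj n x y : j n x = j n y -> x = y.
Proof.
  intros E. apply (cls_eqU I0 U0 HU0 (fun _ => Fn n)) in E.
  apply (uf_const _ _ HU0). exact E.
Qed.

Lemma L_j n Z x : L n Z (j n x) <-> Z x.
Proof.
  unfold L. rewrite <- (uf_const _ _ HU0 (Z x)).
  exact (ae_rw I0 U0 HU0 (fun _ => Fn n) _ (fun _ => x) (fun _ w => Z w) (rep_j n x)).
Qed.

Lemma NL1 n x Z : fN (Fn (S n)) (j n x) (L n Z) <-> fN (Fn n) x Z.
Proof.
  change (UPN I0 U0 (fun _ => Fn n) (cls (fun _ => x)) (fun v => U0 (fun l => Z (rep v l)))
          <-> fN (Fn n) x Z).
  rewrite (box_lemma I0 U0 HU0 (fun _ => Fn n) (fun _ => Fn_mono n) (fun _ => x) (fun _ => Z)).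
  apply (uf_const _ _ HU0).
Qed.

Lemma SLbox1 n Z v : L n (fun x => fN (Fn n) x Z) v <-> fN (Fn (S n)) v (L n Z).
Proof.
  pose proof (box_lemma I0 U0 HU0 (fun _ => Fn n) (fun _ => Fn_mono n) (rep v) (fun _ => Z)) as BL.
  rewrite cls_rep in BL. symmetry. exact BL.
Qed.

Lemma Elem1 n phi (g : nat -> Wn n) :
  sat (Fn (S n)) (fun k => j n (g k)) phi <-> sat (Fn n) g phi.
Proof.
  change (sat (UPF I0 U0 (fun _ => Fn n)) (fun k => j n (g k)) phi <-> sat (Fn n) g phi).
  rewrite (Los I0 U0 HU0 (fun _ => Fn n) (fun _ => Fn_mono n) phi _ (fun k _ => g k)).
  - apply (uf_const _ _ HU0).
  - intros k; reflexivity.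
Qed.

Lemma Def1 n (g : nat -> Wn n) y p v :
  L n (fun w => sat (Fn n) (upd g y w) p) v <->
  sat (Fn (S n)) (upd (fun k => j n (g k)) y v) p.
Proof.
  change (L n (fun w => sat (Fn n) (upd g y w) p) v <->
    sat (UPF I0 U0 (fun _ => Fn n)) (upd (fun k => j n (g k)) y v) p).
  rewrite (Los I0 U0 HU0 (fun _ => Fn n) (fun _ => Fn_mono n) p _
             (upd (fun k (_ : I0) => g k) y (rep v))).
  - unfold L. apply (uf_ext _ _ HU0). intros l.
    rewrite (upd_appP I0 (fun _ => Fn n)). reflexivity.
  - intros k. unfold upd. destruct (Nat.eqb k y); [symmetry; apply cls_rep|reflexivity].
Qed.

Lemma PU1 n x X0 : (forall W, fN (Fn n) x W <-> subset X0 W) ->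
  forall W, fN (Fn (S n)) (j n x) W <-> subset (L n X0) W.
Proof.
  intros H W.
  apply (principal_ae I0 U0 HU0 (fun _ => Fn n) (j n x) (fun _ => X0)).
  apply (ae_rw I0 U0 HU0 (fun _ => Fn n) _ _
    (fun _ w => forall X, fN (Fn n) w X <-> subset X0 X) (rep_clsU I0 U0 HU0 _ _)).
  apply (uf_all _ _ HU0). intros; apply H.
Qed.

Lemma Empty1 n x : (forall W, ~ fN (Fn n) x W) -> forall W, ~ fN (Fn (S n)) (j n x) W.
Proof.
  intros H W [z [H1 H2]].
  apply (proj1 (ae_rw I0 U0 HU0 (fun _ => Fn n) _ (fun _ => x) (fun i w => fN (Fn n) w (z i))
     (rep_j n x))) in H1.
  destruct (uf_ex _ _ HU0 _ H1) as [i Hi]. exact (H _ Hi).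
Qed.

Definition dW (m : nat) : Wn m := epsilon (fW_inh (Fn m)) (fun _ => True).
Definition up (n m : nat) (x : Wn n) : Wn m := tr Wn j dW n m x.
Definition SL (n m : nat) (Z : Wn n -> Prop) : Wn m -> Prop :=
  tr (fun k => Wn k -> Prop) L (fun _ _ => False) n m Z.

Lemma up_refl n x : up n n x = x.
Proof. unfold up. apply (tr_refl Wn). Qed.
Lemma up_S n m x : n <= m -> up n (S m) x = j m (up n m x).
Proof. unfold up. apply (tr_S Wn). Qed.
Lemma up_trans n m k x : n <= m -> m <= k -> up m k (up n m x) = up n k x.
Proof. unfold up. apply (tr_trans Wn). Qed.
Lemma SL_refl n Z : SL n n Z = Z.
Proof. unfold SL. apply (tr_refl (fun k => Wn k -> Prop)). Qed.
Lemma SL_S n m Z : n <= m -> SL n (S m) Z = L m (SL n m Z).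
Proof. unfold SL. apply (tr_S (fun k => Wn k -> Prop)). Qed.
Lemma SL_trans n m k Z : n <= m -> m <= k -> SL m k (SL n m Z) = SL n k Z.
Proof. unfold SL. apply (tr_trans (fun k => Wn k -> Prop)). Qed.
Lemma up_fun_S n m (g : nat -> Wn n) : n <= m ->
  (fun k => up n (S m) (g k)) = (fun k => j m (up n m (g k))).
Proof. intros H. apply functional_extensionality. intros k. apply up_S, H. Qed.

Lemma up_inj n m x y : n <= m -> up n m x = up n m y -> x = y.
Proof.
  intros H. induction H as [|m H IH].
  - rewrite !up_refl; auto.
  - rewrite !up_S by auto. intros E. apply IH. apply j_inj, E.
Qed.

Lemma SL_up n m Z x : n <= m -> (SL n m Z (up n m x) <-> Z x).
Proof.
  intros H. induction H as [|m H IH].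
  - rewrite SL_refl, up_refl. tauto.
  - rewrite SL_S, up_S by auto. rewrite L_j. exact IH.
Qed.

Lemma SL_true n m v : n <= m -> SL n m (fun _ => True) v.
Proof.
  intros H. revert v. induction H as [|m H IH]; intros v.
  - rewrite SL_refl. exact I.
  - rewrite SL_S by auto. unfold L. apply (uf_all _ _ HU0). intros; apply IH.
Qed.
Lemma SL_false n m v : n <= m -> ~ SL n m (fun _ => False) v.
Proof.
  intros H. revert v. induction H as [|m H IH]; intros v.
  - rewrite SL_refl. auto.
  - rewrite SL_S by auto. unfold L. intros X. destruct (uf_ex _ _ HU0 _ X) as [i Hi].
    eapply IH; eauto.
Qed.
Lemma SL_and n m Z Z' v : n <= m ->
  (SL n m (fun w => Z w /\ Z' w) v <-> SL n m Z v /\ SL n m Z' v).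
Proof.
  intros H. revert v. induction H as [|m H IH]; intros v.
  - rewrite !SL_refl. tauto.
  - rewrite !SL_S by auto. unfold L. rewrite <- (uf_and_iff _ _ HU0).
    apply (uf_ext _ _ HU0). intros i. apply IH.
Qed.
Lemma SL_not n m Z v : n <= m -> (SL n m (fun w => ~ Z w) v <-> ~ SL n m Z v).
Proof.
  intros H. revert v. induction H as [|m H IH]; intros v.
  - rewrite !SL_refl. tauto.
  - rewrite !SL_S by auto. unfold L. rewrite <- (uf_not _ _ HU0).
    apply (uf_ext _ _ HU0). intros i. apply IH.
Qed.
Lemma SL_mono n m (Z Z' : Wn n -> Prop) v : n <= m -> (forall w, Z w -> Z' w) ->
  SL n m Z v -> SL n m Z' v.
Proof.
  intros H HZ. revert v. induction H as [|m H IH]; intros v.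
  - rewrite !SL_refl. auto.
  - rewrite !SL_S by auto. unfold L. intros X. apply (uf_mono _ _ HU0 _ _ X). intros i; apply IH.
Qed.

Lemma NL n m x Z : n <= m -> (fN (Fn m) (up n m x) (SL n m Z) <-> fN (Fn n) x Z).
Proof.
  intros H. induction H as [|m H IH].
  - rewrite up_refl, SL_refl. tauto.
  - rewrite up_S, SL_S by auto. rewrite NL1. exact IH.
Qed.

Lemma SLbox n m Z v : n <= m ->
  (SL n m (fun x => fN (Fn n) x Z) v <-> fN (Fn m) v (SL n m Z)).
Proof.
  intros H. revert v. induction H as [|m H IH]; intros v.
  - rewrite !SL_refl. tauto.
  - rewrite !SL_S by auto.
    assert (E : SL n m (fun x => fN (Fn n) x Z) = fun x => fN (Fn m) x (SL n m Z))
      by (apply fext_iff; intros; apply IH).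
    rewrite E. apply SLbox1.
Qed.

Lemma Elem_chain n m (g : nat -> Wn n) phi : n <= m ->
  (sat (Fn m) (fun k => up n m (g k)) phi <-> sat (Fn n) g phi).
Proof.
  intros H. induction H as [|m H IH].
  - assert (E : (fun k => up n n (g k)) = g) by (apply functional_extensionality; intros; apply up_refl).
    rewrite E. tauto.
  - rewrite up_fun_S by auto. rewrite Elem1. exact IH.
Qed.

Lemma Def_chain n m (g : nat -> Wn n) y p v : n <= m ->
  (SL n m (fun w => sat (Fn n) (upd g y w) p) v <->
   sat (Fn m) (upd (fun k => up n m (g k)) y v) p).
Proof.
  intros H. revert v. induction H as [|m H IH]; intros v.
  - rewrite SL_refl.
    assert (E : (fun k => up n n (g k)) = g) by (apply functional_extensionality; intros; apply up_refl).
    rewrite E. tauto.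
  - rewrite SL_S by auto. rewrite up_fun_S by auto.
    assert (E : SL n m (fun w => sat (Fn n) (upd g y w) p) =
                fun w => sat (Fn m) (upd (fun k => up n m (g k)) y w) p)
      by (apply fext_iff; intros; apply IH).
    rewrite E. apply Def1.
Qed.

Lemma PU_chain n m x X0 : n <= m -> (forall W, fN (Fn n) x W <-> subset X0 W) ->
  forall W, fN (Fn m) (up n m x) W <-> subset (SL n m X0) W.
Proof.
  intros H. induction H as [|m H IH]; intros HP.
  - rewrite up_refl, SL_refl. auto.
  - rewrite up_S, SL_S by auto. apply PU1. auto.
Qed.

Lemma Empty_chain n m x : n <= m -> (forall W, ~ fN (Fn n) x W) ->
  forall W, ~ fN (Fn m) (up n m x) W.
Proof.
  intros H. induction H as [|m H IH]; intros HP.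
  - rewrite up_refl. auto.
  - rewrite up_S by auto. apply Empty1. auto.
Qed.
Definition Pt := {n : nat & Wn n}.
Definition Rlim (p q : Pt) : Prop :=
  exists M, projT1 p <= M /\ projT1 q <= M /\
    up (projT1 p) M (projT2 p) = up (projT1 q) M (projT2 q).

Lemma lift_eq n m M1 M x y : n <= M1 -> m <= M1 -> M1 <= M ->
  up n M1 x = up m M1 y -> up n M x = up m M y.
Proof.
  intros H1 H2 H3 E. rewrite <- (up_trans n M1 M), <- (up_trans m M1 M) by auto.
  rewrite E; reflexivity.
Qed.

Lemma Rlim_refl p : Rlim p p.
Proof. exists (projT1 p). auto. Qed.
Lemma Rlim_sym p q : Rlim p q -> Rlim q p.
Proof. intros [M [A [B C]]]. exists M. auto. Qed.
Lemma Rlim_trans p q r : Rlim p q -> Rlim q r -> Rlim p r.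
Proof.
  destruct p as [n x], q as [m y], r as [k z]; unfold Rlim; simpl.
  intros [M1 [A1 [B1 C1]]] [M2 [A2 [B2 C2]]]. simpl in *.
  exists (max M1 M2). split; [lia|split; [lia|]].
  rewrite (lift_eq n m M1 (max M1 M2) x y) by (auto; lia).
  apply (lift_eq m k M2); auto; lia.
Qed.

Definition GW := quot Pt Rlim.
Definition cl (n : nat) (x : Wn n) : GW := @cls Pt Rlim (existT _ n x).

Lemma cl_eq_at n x m y M : cl n x = cl m y -> n <= M -> m <= M -> up n M x = up m M y.
Proof.
  intros E H1 H2. apply (cls_eq _ _ Rlim_refl Rlim_sym Rlim_trans) in E.
  destruct E as [M' [A [B C]]]. simpl in *.
  apply (up_inj M (max M M')); [lia|].
  rewrite !up_trans by lia.
  apply (lift_eq n m M'); auto; lia.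
Qed.

Lemma cl_up n m x : n <= m -> cl n x = cl m (up n m x).
Proof.
  intros H. apply (cls_eq _ _ Rlim_refl Rlim_sym Rlim_trans).
  exists m. simpl. split; auto. split; auto. rewrite up_refl. reflexivity.
Qed.

Lemma cl_surj (q : GW) : exists n x, q = cl n x.
Proof.
  rewrite <- (cls_rep _ _ q). destruct (rep q) as [n x]. exists n, x. reflexivity.
Qed.

Lemma cl_inj n x y : cl n x = cl n y -> x = y.
Proof.
  intros E. pose proof (cl_eq_at n x n y n E (le_n _) (le_n _)) as E2.
  rewrite !up_refl in E2. exact E2.
Qed.

Definition Ext (n : nat) (Z : Wn n -> Prop) (q : GW) : Prop :=
  exists m y, q = cl m y /\ n <= m /\ SL n m Z y.

Lemma ExtE n Z m y : n <= m -> (Ext n Z (cl m y) <-> SL n m Z y).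
Proof.
  intros H. split.
  - intros [m' [y' [E [H' S']]]].
    set (K := max m m').
    pose proof (cl_eq_at m y m' y' K E ltac:(lia) ltac:(lia)) as E2.
    rewrite <- (SL_up m K (SL n m Z) y) by lia.
    rewrite SL_trans by lia. rewrite E2.
    rewrite <- (SL_trans n m' K) by lia. rewrite SL_up by lia. exact S'.
  - intros S. exists m, y. auto.
Qed.

Lemma Ext_lift n m Z q : n <= m -> (Ext m (SL n m Z) q <-> Ext n Z q).
Proof.
  intros H. destruct (cl_surj q) as [k [y ->]].
  set (K := max k m). rewrite (cl_up k K y) by lia.
  rewrite !ExtE by lia. rewrite SL_trans by lia. tauto.
Qed.

Lemma Ext_mono n (Z Z' : Wn n -> Prop) q : (forall w, Z w -> Z' w) -> Ext n Z q -> Ext n Z' q.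
Proof.
  intros HZ [m [y [E [H S]]]]. exists m, y. split; auto. split; auto.
  eapply SL_mono; eauto.
Qed.

Definition GN (q : GW) (Y : GW -> Prop) : Prop :=
  exists n x Z, q = cl n x /\ fN (Fn n) x Z /\ forall q', Ext n Z q' -> Y q'.

Lemma GW_inh : inhabited GW.
Proof. constructor. exact (cl 0 (dW 0)). Qed.
Definition GF : Frame := mkFrame GW GN GW_inh.

Lemma asg_lift n m M (g : nat -> Wn n) x y : n <= M -> m <= M ->
  upd (fun k => cl n (g k)) x (cl m y) =
  (fun k => cl M (upd (fun k => up n M (g k)) x (up m M y) k)).
Proof.
  intros H1 H2. apply functional_extensionality. intros k. unfold upd.
  destruct (Nat.eqb k x); apply cl_up; auto.
Qed.

Lemma Elem phi : forall n (g : nat -> Wn n),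
  sat GF (fun k => cl n (g k)) phi <-> sat (Fn n) g phi.
Proof.
  induction phi as [x y|p IH|p IH q IH2|p IH q IH2|x p IH|x y p IH]; intros n g; simpl.
  - split; [apply cl_inj| intros ->; reflexivity].
  - rewrite IH. tauto.
  - rewrite IH, IH2. tauto.
  - rewrite IH, IH2. tauto.
  - split.
    + intros [v Hv]. destruct (cl_surj v) as [m [y ->]].
      set (M := max n m). rewrite (asg_lift n m M) in Hv by lia.
      rewrite IH in Hv.
      apply (Elem_chain n M g (FEx x p)); [lia|]. simpl. eauto.
    + intros [w Hw]. exists (cl n w).
      assert (E : upd (fun k => cl n (g k)) x (cl n w) = fun k => cl n (upd g x w k)).
      { apply functional_extensionality. intros k. unfold upd. destruct (Nat.eqb k x); reflexivity. }
      rewrite E, IH. exact Hw.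
  - set (Sn := fun w => sat (Fn n) (upd g y w) p).
    assert (ES : forall v, sat GF (upd (fun k => cl n (g k)) y v) p <-> Ext n Sn v).
    { intros v. destruct (cl_surj v) as [m [w ->]].
      set (M := max n m). rewrite (asg_lift n m M) by lia. rewrite IH.
      rewrite (cl_up m M w) by lia. rewrite ExtE by lia.
      unfold Sn. rewrite Def_chain by lia. tauto. }
    change (GN (cl n (g x)) (fun v => sat GF (upd (fun k => cl n (g k)) y v) p) <->
            fN (Fn n) (g x) Sn).
    split.
    + intros [m [x' [Z [E [HN HZ]]]]].
      set (M := max n m).
      pose proof (cl_eq_at n (g x) m x' M E ltac:(lia) ltac:(lia)) as E2.
      apply (NL m M x' Z) in HN; [|lia].
      rewrite <- E2 in HN.
      apply (NL n M (g x) Sn); [lia|].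
      apply (Fn_mono M _ _ _ HN). intros w Hw.
      apply (ExtE n Sn M w); [lia|]. apply ES. apply HZ.
      apply (ExtE m Z M w); [lia|]. exact Hw.
    + intros H. exists n, (g x), Sn. split; auto. split; auto.
      intros q' Hq. apply ES. exact Hq.
Qed.
Fixpoint maxupto (h : nat -> nat) (N : nat) : nat :=
  match N with 0 => h 0 | S k => max (maxupto h k) (h (S k)) end.
Lemma maxupto_ge h N k : k <= N -> h k <= maxupto h N.
Proof.
  induction N; intros H; simpl.
  - inversion H; subst; auto.
  - inversion H; subst; [lia|]. specialize (IHN H1). lia.
Qed.

Lemma G_mono : monotonic GF.
Proof.
  intros q X Y [n [x [Z [E [H1 H2]]]]] HXY. exists n, x, Z.
  split; [exact E|]. split; [exact H1|].
  intros q' Hq. apply HXY, H2, Hq.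
Qed.

Lemma G_fin : (forall n, fin_inter_closed (Fn n)) -> fin_inter_closed GF.
Proof.
  intros Hf q N X H. destruct (cl_surj q) as [n0 [x0 ->]].
  assert (Hc : forall k, exists d : {n : nat & (Wn n * (Wn n -> Prop))%type}, k <= N ->
     cl n0 x0 = cl (projT1 d) (fst (projT2 d)) /\ fN (Fn (projT1 d)) (fst (projT2 d)) (snd (projT2 d))
     /\ forall q', Ext (projT1 d) (snd (projT2 d)) q' -> X k q').
  { intros k. destruct (le_lt_dec k N) as [Hk|Hk].
    - destruct (H k Hk) as [n [x [Z [E [H1 H2]]]]]. exists (existT _ n (x, Z)). simpl. auto.
    - exists (existT _ 0 (dW 0, fun _ => True)). intros; lia. }
  destruct (choice_dep _ Hc) as [d Hd].
  set (M := max n0 (maxupto (fun k => projT1 (d k)) N)).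
  assert (HM : forall k, k <= N -> projT1 (d k) <= M).
  { intros k Hk. pose proof (maxupto_ge (fun k => projT1 (d k)) N k Hk). unfold M. simpl in *. lia. }
  set (xM := up n0 M x0).
  exists M, xM, (fun v => forall k, k <= N -> SL (projT1 (d k)) M (snd (projT2 (d k))) v).
  split; [apply cl_up; unfold M; lia|]. split.
  - apply (Hf M xM N (fun k => SL (projT1 (d k)) M (snd (projT2 (d k))))).
    intros k Hk. destruct (Hd k Hk) as [E [H1 H2]].
    assert (E2 : up (projT1 (d k)) M (fst (projT2 (d k))) = xM).
    { unfold xM. symmetry. apply cl_eq_at; auto. unfold M; lia. }
    rewrite <- E2. apply NL; auto.
  - intros q' Hq k Hk. destruct (Hd k Hk) as [E [H1 H2]]. apply H2.
    apply (Ext_lift (projT1 (d k)) M); auto.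
    apply (Ext_mono M _ _ q' (fun v Hv => Hv k Hk) Hq).
Qed.

Lemma G_principal n0 x0 X0 : (forall W, fN (Fn n0) x0 W <-> subset X0 W) ->
  forall Y, GN (cl n0 x0) Y <-> subset (Ext n0 X0) Y.
Proof.
  intros HP Y. split.
  - intros [m [x' [Z [E [HN HZ]]]]] q' Hq.
    set (M := max n0 m).
    pose proof (cl_eq_at n0 x0 m x' M E ltac:(lia) ltac:(lia)) as E2.
    apply (NL m M x' Z) in HN; [|lia]. rewrite <- E2 in HN.
    apply (PU_chain n0 M x0 X0) in HN; [|lia|auto].
    apply HZ. apply (Ext_lift m M); [lia|].
    apply (Ext_mono M _ _ q' HN). apply (Ext_lift n0 M); [lia|auto].
  - intros Hs. exists n0, x0, X0. split; auto. split; auto. apply HP. intros v; auto.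
Qed.

Lemma G_empty n0 x0 : (forall W, ~ fN (Fn n0) x0 W) -> forall Y, ~ GN (cl n0 x0) Y.
Proof.
  intros HE Y [m [x' [Z [E [HN HZ]]]]].
  set (M := max n0 m).
  pose proof (cl_eq_at n0 x0 m x' M E ltac:(lia) ltac:(lia)) as E2.
  apply (NL m M x' Z) in HN; [|lia]. rewrite <- E2 in HN.
  apply (Empty_chain n0 M x0) in HN; auto; lia.
Qed.

Lemma G_class : in_class c GF.
Proof.
  pose proof Fn_class as HF. case_eq c; intros Ec; rewrite Ec in HF; simpl in *.
  - apply G_mono.
  - split; [apply G_mono|apply G_fin; intros n; apply HF].
  - intros q. destruct (cl_surj q) as [n0 [x0 ->]].
    destruct (HF n0 x0) as [E|[X0 HX0]].
    + left. intros Y. apply G_empty; auto.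
    + right. exists (Ext n0 X0). apply G_principal; auto.
  - split; [split; [apply G_mono|apply G_fin; intros n; apply HF]|].
    intros q. destruct (cl_surj q) as [n0 [x0 ->]].
    destruct (proj2 (HF n0) x0) as [X HX]. exists (fun _ => True).
    exists n0, x0, X. auto.
  - intros q. destruct (cl_surj q) as [n0 [x0 ->]].
    destruct (HF n0 x0) as [X0 HX0]. exists (Ext n0 X0). apply G_principal; auto.
Qed.

Lemma G_models phi : sentence phi -> models F0 phi -> models GF phi.
Proof.
  intros Hs HF g. apply (coinc GF phi (fun _ => cl 0 (dW 0))).
  - intros z Hz. exfalso. apply (Hs z Hz).
  - apply (Elem phi 0 (fun _ => dW 0)). apply HF.
Qed.

Variable A : BAM.
Variable f : carrier A -> fW F0 -> Prop.
Hypothesis Hf : is_hom A (cplx F0) f.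
Hypothesis Hfi : forall a b, f a = f b -> a = b.

Lemma fj a b : f (bjoin A a b) = fun w => f a w \/ f b w.
Proof. apply Hf. Qed.
Lemma fm a b : f (bmeet A a b) = fun w => f a w /\ f b w.
Proof. apply Hf. Qed.
Lemma fc a : f (bcompl A a) = fun w => ~ f a w.
Proof. apply Hf. Qed.
Lemma fb : f (bbot A) = fun _ => False.
Proof. apply Hf. Qed.
Lemma ft : f (btop A) = fun _ => True.
Proof. apply Hf. Qed.
Lemma fbox a : f (bbox A a) = fun w => fN F0 w (f a).
Proof. apply Hf. Qed.

Lemma meet_compl a : bmeet A a (bcompl A a) = bbot A.
Proof. apply Hfi. rewrite fm, fc, fb. apply fext_iff. intros; tauto. Qed.

Definition tset (q : GW) : carrier A -> Prop := fun a => Ext 0 (f a) q.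

Lemma tset_uf q : is_uf A (tset q).
Proof.
  destruct (cl_surj q) as [m [y ->]]. unfold tset.
  assert (E : forall a, Ext 0 (f a) (cl m y) <-> SL 0 m (f a) y) by (intros; apply ExtE; lia).
  split; [|split; [|split; [|split]]].
  - rewrite E, ft. apply SL_true; lia.
  - rewrite E, fb. apply SL_false; lia.
  - intros a b. rewrite !E, fm. intros Ha Hb. apply (proj2 (SL_and 0 m (f a) (f b) y ltac:(lia))); auto.
  - intros a b Ha Hab. rewrite !E in *. apply (SL_mono 0 m (f a) (f b) y ltac:(lia)); auto.
    intros w Hw. unfold ble in Hab. rewrite <- Hab in Hw. rewrite fm in Hw. tauto.
  - intros a. rewrite !E, fc, SL_not by lia. tauto.
Qed.

Definition typ (q : GW) : Uf A := exist _ (tset q) (tset_uf q).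

Lemma uf_sub_eq (u v : Uf A) : (forall a, proj1_sig u a -> proj1_sig v a) -> u = v.
Proof.
  intros H. apply sig_ext. apply fext_iff. intros a. split; [apply H|].
  intros Hv. destruct (proj2_sig u) as [_ [_ [_ [_ Hc]]]].
  destruct (Hc a) as [Ha|Ha]; auto.
  apply H in Ha. destruct (proj2_sig v) as [_ [Hbot [Hm _]]].
  exfalso. apply Hbot. rewrite <- (meet_compl a). apply Hm; auto.
Qed.

Lemma fin_meet (Pa Q : carrier A -> Prop) : Pa (btop A) ->
  (forall a b, Pa a -> Pa b -> Pa (bmeet A a b)) -> (forall a, Q a -> Pa a) ->
  forall l : list (fW F0 -> Prop), exists b, Pa b /\
    forall S, In S l -> (exists a, Q a /\ S = f a) -> forall w, f b w -> S w.
Proof.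
  intros Ht Hm HQ l. induction l as [|S l IH].
  - exists (btop A). split; auto. intros S HS; destruct HS.
  - destruct IH as [b [Hb Hbl]].
    destruct (classic (exists a, Q a /\ S = f a)) as [[a [Qa ->]]|N].
    + exists (bmeet A b a). split; auto.
      intros S' HS' HQ' w Hw. rewrite fm in Hw. destruct Hw as [Hw1 Hw2].
      destruct HS' as [<-|HS']; auto. apply (Hbl S'); auto.
    + exists b. split; auto. intros S' [<-|HS'] HQ' w Hw; [contradiction|]. apply (Hbl S'); auto.
Qed.

Lemma uf_nonempty (u : Uf A) b : proj1_sig u b -> exists w, f b w.
Proof.
  intros Hb. apply NNPP. intros N. destruct (proj2_sig u) as [_ [Hbot _]].
  apply Hbot. replace (bbot A) with b; auto. apply Hfi. rewrite fb. apply fext_iff.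
  intros w. split; [intros Hw; apply N; eauto|tauto].
Qed.

Lemma uf_top (u : Uf A) : proj1_sig u (btop A).
Proof. apply (proj2_sig u). Qed.
Lemma uf_meet (u : Uf A) a b : proj1_sig u a -> proj1_sig u b -> proj1_sig u (bmeet A a b).
Proof. apply (proj2_sig u). Qed.

Lemma L_cls n (Z : Wn n -> Prop) (h : I0 -> Wn n) :
  L n Z (@cls (Prod I0 (fun _ => Fn n)) (Req I0 U0 (fun _ => Fn n)) h) <-> U0 (fun l => Z (h l)).
Proof.
  unfold L. exact (ae_rw I0 U0 HU0 (fun _ => Fn n) _ h (fun _ w => Z w) (rep_clsU I0 U0 HU0 _ _)).
Qed.

Lemma typ_surj (u : Uf A) : exists q, typ q = u.
Proof.
  assert (Hc : forall l : I0, exists w : fW F0,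
             forall S, In S l -> (exists a, proj1_sig u a /\ S = f a) -> S w).
  { intros l. destruct (fin_meet (proj1_sig u) (proj1_sig u) (uf_top u) (uf_meet u) (fun a H => H) l)
      as [b [Hb Hbl]].
    destruct (uf_nonempty u b Hb) as [w Hw]. exists w. intros S HS HQ. apply (Hbl S HS HQ w Hw). }
  destruct (choice_dep _ Hc) as [h Hh].
  exists (cl 1 (@cls (Prod I0 (fun _ => Fn 0)) (Req I0 U0 (fun _ => Fn 0)) h)).
  symmetry. apply uf_sub_eq. intros a Ha. simpl. unfold tset.
  rewrite ExtE by lia. rewrite SL_S by lia. rewrite SL_refl. rewrite L_cls.
  apply (uf_mono _ _ HU0 _ _ (Hfine (f a))). intros l Hl. apply (Hh l (f a) Hl). eauto.
Qed.

Definition emb (X : Uf A -> Prop) : GW -> Prop := fun q => X (typ q).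

Lemma box_iff q X : box_sigma A X (typ q) <-> GN q (emb X).
Proof.
  unfold box_sigma, bracket, closed_set. split.
  - intros [K [[D HD] [HKX HKbox]]]. destruct (cl_surj q) as [n [x ->]].
    set (z := fun (l : I0) (w : Wn n) =>
           forall S, In S l -> (exists a, D a /\ S = f a) -> SL 0 n S w).
    exists (S n), (j n x),
      (fun v => U0 (fun l => z l (@rep (Prod I0 (fun _ => Fn n)) (Req I0 U0 (fun _ => Fn n)) v l))).
    split.
    { rewrite (cl_up n (S n) x) by lia. rewrite up_S, up_refl by lia. reflexivity. }
    split.
    + change (UPN I0 U0 (fun _ => Fn n) (j n x)
               (fun v => U0 (fun l => z l (rep v l)))).
      exists z. split.
      * apply (proj2 (ae_rw I0 U0 HU0 (fun _ => Fn n) _ (fun _ => x)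
                 (fun l w => fN (Fn n) w (z l)) (rep_j n x))).
        apply (uf_all _ _ HU0). intros l.
        destruct (fin_meet (fun b => forall u, K u -> proj1_sig u b) D) with (l := l)
          as [b [Hb Hbl]].
        -- intros u _. apply uf_top.
        -- intros a b Ha Hb u Ku. apply uf_meet; auto.
        -- intros a Da u Ku. apply (proj1 (HD u) Ku a Da).
        -- assert (Hbox := HKbox b Hb). simpl in Hbox. unfold tset in Hbox.
           rewrite ExtE, fbox in Hbox by lia.
           apply (SLbox 0 n (f b) x) in Hbox; [|lia].
           apply (Fn_mono n _ _ _ Hbox). intros w Hw S HS HQ.
           exact (SL_mono 0 n (f b) S w ltac:(lia) (Hbl S HS HQ) Hw).
      * intros h Hh. exact (proj2 (ae_rw I0 U0 HU0 (fun _ => Fn n) _ h (fun l w => z l w)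
                                     (rep_clsU I0 U0 HU0 _ _)) Hh).
    + intros q' Hq'. unfold emb. apply HKX. apply HD. intros d Dd.
      simpl. unfold tset.
      destruct Hq' as [m [y [-> [Hm HS]]]].
      rewrite ExtE by lia. rewrite <- (SL_trans 0 (S n) m) by lia.
      refine (SL_mono (S n) m _ (SL 0 (S n) (f d)) y Hm _ HS).
      intros v Hv. rewrite SL_S by lia. unfold L.
      apply (uf_mono _ _ HU0 _ _ (uf_and _ _ HU0 _ _ Hv (Hfine (f d)))).
      intros l [Hz Hin]. apply Hz; eauto.
  - intros [n [x [Z [-> [HN HZ]]]]].
    set (D := fun a => forall w, Z w -> SL 0 n (f a) w).
    set (K := fun u : Uf A => forall a, D a -> proj1_sig u a).
    exists K. split; [exists D; unfold K; tauto|]. split.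
    + intros u Ku.
      assert (Hc : forall l : I0, exists w : Wn n, Z w /\
                 forall S, In S l -> (exists a, proj1_sig u a /\ S = f a) -> SL 0 n S w).
      { intros l.
        destruct (fin_meet (proj1_sig u) (proj1_sig u) (uf_top u) (uf_meet u) (fun a H => H) l)
          as [b [Hb Hbl]].
        destruct (classic (exists w, Z w /\ SL 0 n (f b) w)) as [[w [Zw Sw]]|N].
        - exists w. split; auto. intros S HS HQ. exact (SL_mono 0 n (f b) S w ltac:(lia) (Hbl S HS HQ) Sw).
        - exfalso.
          assert (Dc : D (bcompl A b)).
          { intros w Zw. rewrite fc. rewrite SL_not by lia. intros Sw. apply N; eauto. }
          apply Ku in Dc. destruct (proj2_sig u) as [_ [Hbot [Hm _]]].
          apply Hbot. rewrite <- (meet_compl b). apply Hm; auto. }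
      destruct (choice_dep _ Hc) as [h Hh].
      set (q' := cl (S n) (@cls (Prod I0 (fun _ => Fn n)) (Req I0 U0 (fun _ => Fn n)) h)).
      assert (Eq : typ q' = u).
      { symmetry. apply uf_sub_eq. intros a Ha. simpl. unfold tset, q'.
        rewrite ExtE by lia. rewrite SL_S by lia. rewrite L_cls.
        apply (uf_mono _ _ HU0 _ _ (Hfine (f a))). intros l Hl. apply (proj2 (Hh l) (f a) Hl). eauto. }
      rewrite <- Eq. apply HZ. unfold q'. rewrite ExtE by lia. rewrite SL_S, SL_refl by lia.
      rewrite L_cls. apply (uf_all _ _ HU0). intros l. apply (Hh l).
    + intros a Ka.
      assert (Da : D a).
      { intros w Zw.
        assert (Kw : K (typ (cl n w))).
        { intros d Dd. simpl. unfold tset. rewrite ExtE by lia. apply Dd, Zw. }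
        apply Ka in Kw. simpl in Kw. unfold tset in Kw. rewrite ExtE in Kw by lia. exact Kw. }
      simpl. unfold tset. rewrite ExtE by lia. rewrite fbox.
      apply (SLbox 0 n (f a) x); [lia|].
      apply (Fn_mono n _ _ _ HN). exact Da.
Qed.

Lemma emb_hom : is_hom (can_ext A) (cplx GF) emb.
Proof.
  split; [reflexivity|]. split; [reflexivity|]. split; [reflexivity|].
  split; [reflexivity|]. split; [reflexivity|].
  intros X. apply fext_iff. intros q. apply box_iff.
Qed.

Lemma emb_inj X Y : emb X = emb Y -> X = Y.
Proof.
  intros E. apply fext_iff. intros u. destruct (typ_surj u) as [q <-].
  assert (E2 := f_equal (fun P => P q) E). simpl in E2. unfold emb in E2. rewrite E2. tauto.
Qed.
End Part1.

Lemma part1 c T (HT : forall phi, T phi -> sentence phi) (A : BAM) :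
  S_class (elem_class c T) A -> S_class (elem_class c T) (can_ext A).
Proof.
  intros HA. apply S_class_iff in HA. destruct HA as [F0 [[Hc0 HM] [f [Hf Hfi]]]].
  destruct (fine_uf (fW F0 -> Prop)) as [U0 [HU0 Hfine]].
  apply S_class_iff. exists (GF F0 U0). split.
  - split.
    + apply (G_class c F0 Hc0 U0 HU0).
    + intros phi Hphi. apply (G_models c F0 Hc0 U0 HU0); auto.
  - exists (emb F0 U0 HU0 A f Hf). split.
    + apply (emb_hom c F0 Hc0 U0 HU0 Hfine A f Hf Hfi).
    + apply (emb_inj F0 U0 HU0 Hfine A f Hf Hfi).
Qed.

Theorem lemma5p3 (c : FrameClass) (T : formula -> Prop)
    (HT : forall phi, T phi -> sentence phi) :
  (forall A : BAM, S_class (elem_class c T) A ->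
     S_class (elem_class c T) (can_ext A)) /\
  (forall (I : Type) (U : (I -> Prop) -> Prop) (A : I -> BAM) (B : BAM),
     is_set_uf U ->
     (forall i, S_class (elem_class c T) (A i)) ->
     is_ultraproduct U A B ->
     S_class (elem_class c T) B).
Proof.
  split.
  - intros A HA. apply (part1 c T HT A HA).
  - intros I U A B HU HA HB. apply (part2 c T I U A B HU HA HB).
Qed.
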